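(* Suppose the $L$-smoothness assumption holds and let $\{w_t\}_{t\ge0}$, $\{v_t\}_{t\ge0}$, $\{\hat D_t\}_{t\ge0}$ be generated by {\tt Scaled SARAH} with any step-size $\eta>0$. Then for every $t\ge0$, $$P(w_{t+1})\le P(w_t)+\frac{\eta}{2\alpha}\|\nabla P(w_t)-v_t\|^2-\left(\frac1{2\eta}-\frac{L}{2\alpha}\right)\|w_{t+1}-w_t\|^2_{\hat D_t}-\frac{\eta}{2}\|\nabla P(w_t)\|^2_{\hat D_t^{-1}}.$$
   Context: $P=\frac1n\sum_{i=1}^nf_i$ with $f_i:\mathbb{R}^d\to\mathbb{R}$. $L$-smoothness assumption: each $f_i$ and $P$ are twice differentiable with $L$-Lipschitz gradients. $\|x\|_D^2=x^TDx$ for positive definite $D$. For $J\subseteq[n]$, $\nabla^2P_J(w)=\frac1{|J|}\sum_{j\in J}\nabla^2 f_j(w)$; $\odot$ is the Hadamard product; $\mathrm{diag}(x)$ is the diagonal matrix with the entries of $x$. Preconditioner (parameters $\alpha>0$, $\beta\in(0,1)$, $m\ge1$): $D_0=\frac1m\sum_{j=1}^m\mathrm{diag}(z_j\odot\nabla^2P_{\mathcal{J}_j}(w_0)z_j)$, $D_t=\beta D_{t-1}+(1-\beta)\mathrm{diag}(z_t\odot\nabla^2P_{\mathcal{J}_t}(w_t)z_t)$ for $t\ge1$, with independent Rademacher vectors $z$ and random index sets $\mathcal{J}\subseteq[n]$; $\hat D_t$ diagonal with $(\hat D_t)_{ii}=\max\{\alpha,|(D_t)_{ii}|\}$. {\tt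 Scaled SARAH} (input $w_0$, $\eta$, $p\in(0,1]$): $v_0=\nabla P(w_0)$; for $t\ge0$: $w_{t+1}=w_t-\eta\hat D_t^{-1}v_t$; draw $i_{t+1}$ uniformly from $[n]$; with probability $p$, $v_{t+1}=\nabla P(w_{t+1})$, otherwise $v_{t+1}=v_t+\nabla f_{i_{t+1}}(w_{t+1})-\nabla f_{i_{t+1}}(w_t)$; update $\hat D_{t+1}$. *)

(* Defs.v *)
From HB Require Import structures.
From mathcomp Require Import all_boot all_order all_algebra.
From mathcomp Require Import all_classical all_reals all_analysis.
Set Implicit Arguments. Unset Strict Implicit. Unset Printing Implicit Defensive.
Import Order.TTheory GRing.Theory Num.Theory.
Import numFieldNormedType.Exports.
Local Open Scope ring_scope.

Section Defs.
Variables (R : realType) (d : nat).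
Notation vec := 'rV[R]_d.

Definition ebasis (j : 'I_d) : vec := delta_mx 0 j.

Definition grad (f : vec -> R) (x : vec) : vec := \row_j ('d f x) (ebasis j).

Definition hess (f : vec -> R) (x : vec) : 'M[R]_d :=
  \matrix_(i, j) ('d (fun y => grad f y 0 i) x) (ebasis j).

Definition twice_diff (f : vec -> R) : Prop :=
  (forall x, differentiable f x) /\
  (forall i : 'I_d, forall x, differentiable (fun y => grad f y 0 i) x).

Definition sqnorm (x : vec) : R := \sum_i x 0 i ^+ 2.
Definition enorm (x : vec) : R := Num.sqrt (sqnorm x).

(* ||x||_D^2 = x^T diag(dg) x, for a diagonal matrix given by its diagonal dg *)
Definition dnorm2 (dg x : vec) : R := \sum_i dg 0 i * x 0 i ^+ 2.

Definition lipschitz_grad (L : R) (f : vec -> R) : Prop :=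
  forall x y, enorm (grad f x - grad f y) <= L * enorm (x - y).

(* diag(z ⊙ (H z)) represented by its diagonal *)
Definition hvp_diag (H : 'M[R]_d) (z : vec) : vec :=
  \row_i (z 0 i * \sum_j H i j * z 0 j).

Definition rademacher (z : vec) : Prop := forall i, z 0 i = 1 \/ z 0 i = -1.

Definition clipD (alpha : R) (D : vec) : vec := \row_i Num.max alpha `|D 0 i|.

End Defs.

Definition avgP (R : realType) (d n : nat) (f : 'I_n -> 'rV[R]_d -> R) (x : 'rV[R]_d) : R :=
  n%:R^-1 * \sum_i f i x.

Definition hessJ (R : realType) (d n : nat) (f : 'I_n -> 'rV[R]_d -> R) (J : {set 'I_n})
  (x : 'rV[R]_d) : 'M[R]_d :=
  (#|J|%:R)^-1 *: \sum_(j in J) hess (f j) x.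

(* Main.v *)
Require Import Defs.
From HB Require Import structures.
From mathcomp Require Import all_boot all_order all_algebra.
From mathcomp Require Import all_classical all_reals all_analysis.
From mathcomp Require Import ring lra.
Import Order.TTheory GRing.Theory Num.Theory.
Import numFieldNormedType.Exports.
Set Implicit Arguments. Unset Strict Implicit.
Local Open Scope ring_scope.

Lemma mxB (R : pzRingType) m n (A B : 'M[R]_(m, n)) i j : (A - B) i j = A i j - B i j.
Proof. by rewrite !mxE. Qed.
Lemma mxD (R : pzRingType) m n (A B : 'M[R]_(m, n)) i j : (A + B) i j = A i j + B i j.
Proof. by rewrite !mxE. Qed.
Lemma mxZ (R : pzRingType) m n (a : R) (A : 'M[R]_(m, n)) i j : (a *: A) i j = a * A i j.
Proof. by rewrite !mxE. Qed.

Lemma rowE (R : Type) n (F : 'I_n -> R) j : (\row_i F i) 0 j = F j.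
Proof. by rewrite mxE. Qed.

Lemma dsum (R : realType) d (f : 'rV[R]_d -> R) x (s : 'rV[R]_d) :
  'd f x s = \sum_j s 0 j * grad f x 0 j.
Proof.
rewrite {1}(matrix_sum_delta s) big_ord1 linear_sum; apply: eq_bigr => j _.
by rewrite linearZ /= /grad mxE.
Qed.

Lemma phi_derive (R : realType) d (P : 'rV[R]_d -> R) x s (tau : R) :
  (forall y, differentiable P y) ->
  is_derive tau 1 (fun u : R => P (x + u *: s)) (\sum_j s 0 j * grad P (x + tau *: s) 0 j).
Proof.
move=> dP.
have E : (fun h : R => h^-1 *: (((fun u : R => P (x + u *: s)) \o shift tau) (h *: 1) - P (x + tau *: s)))
  = (fun h : R => h^-1 *: ((P \o shift (x + tau *: s)) (h *: s) - P (x + tau *: s))).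
  apply/funext => h /=; congr (_ *: (P _ - _)).
  by rewrite scalerDl /GRing.scale /= mulr1 addrCA addrA.
have Hd : derivable P (x + tau *: s) s by exact: diff_derivable.
apply: DeriveDef.
  by rewrite /derivable E.
by rewrite /derive E -/(derive P _ s) deriveE // dsum.
Qed.

Lemma psi_derive (R : realType) d (P : 'rV[R]_d -> R) x s (c k tau : R) :
  (forall y, differentiable P y) ->
  is_derive tau 1 ((fun u : R => P (x + u *: s)) - cst c * id - cst k * id ^+ 2)
    (\sum_j s 0 j * grad P (x + tau *: s) 0 j - c - k * (2 * tau)).
Proof.
move=> dP.
have h1 := phi_derive x s tau dP.
apply: is_derive_eq.
by rewrite !scaler0 !addr0 /= expr1 /GRing.scale /= !mulr1.
Qed.

Lemma sqnorm_ge0 (R : realType) d (a : 'rV[R]_d) : 0 <= sqnorm a.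
Proof. by apply: sumr_ge0 => j _; apply: sqr_ge0. Qed.

Lemma sqnormZ (R : realType) d (t : R) (a : 'rV[R]_d) : sqnorm (t *: a) = t ^+ 2 * sqnorm a.
Proof. by rewrite /sqnorm mulr_sumr; apply: eq_bigr => j _; rewrite mxE exprMn. Qed.

Lemma cs_bound (R : realType) d (K : R) (a s : 'rV[R]_d) :
  0 <= K -> sqnorm a <= K ^+ 2 * sqnorm s -> \sum_j s 0 j * a 0 j <= K * sqnorm s.
Proof.
move=> K0 Ha.
have [Ke|Kpos] := eqVneq K 0.
  rewrite Ke in Ha *.
  have a0 : sqnorm a = 0.
    by apply/eqP; rewrite eq_le sqnorm_ge0 andbT; move: Ha; rewrite expr2 !mul0r.
  rewrite mul0r big1 // => j _.
  have := psumr_eq0P (P := xpredT) (F := fun j => a 0 j ^+ 2) (fun j _ => sqr_ge0 _) a0 (i := j) isT.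
  by move/eqP; rewrite sqrf_eq0 => /eqP ->; rewrite mulr0.
have Kp : 0 < K by rewrite lt_def Kpos K0.
have h : K * (2 * \sum_j s 0 j * a 0 j) <= sqnorm a + K ^+ 2 * sqnorm s.
  rewrite /sqnorm !mulr_sumr -big_split /=; apply: ler_sum => j _.
  have := sqr_ge0 (a 0 j - K * s 0 j); nra.
have hs := sqnorm_ge0 s.
nra.
Qed.

Lemma descent (R : realType) d (P : 'rV[R]_d -> R) (L : R) x s :
  (forall y, differentiable P y) -> lipschitz_grad L P -> 0 <= L ->
  P (x + s) <= P x + \sum_j s 0 j * grad P x 0 j + L / 2 * sqnorm s.
Proof.
move=> dP lip L0.
set c := \sum_j s 0 j * grad P x 0 j; set k := L / 2 * sqnorm s.
set psi := (fun u : R => P (x + u *: s)) - cst c * id - cst k * id ^+ 2.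
have hd : forall tau : R, is_derive tau 1 psi (\sum_j s 0 j * grad P (x + tau *: s) 0 j - c - k * (2 * tau)).
  by move=> tau; apply: psi_derive.
have := MVT ltr01 (fun u _ => hd u); case.
  by apply: derivable_within_continuous => u _; apply: (@ex_derive _ _ _ _ _ _ _ (hd u)).
move=> t t01 E.
have e1 : psi 1 = P (x + s) - c - k.
  by change (P (x + 1 *: s) - c * 1 - k * (1 ^+ 2) = P (x + s) - c - k); rewrite scale1r mulr1 expr1n mulr1.
have e0 : psi 0 = P x.
  by change (P (x + 0 *: s) - c * 0 - k * (0 ^+ 2) = P x); rewrite scale0r addr0 expr0n /= !mulr0 !subr0.
move: E; rewrite e1 e0 subr0 mulr1.
move: t01; rewrite in_itv /= => /andP [t0 t1].
set a := grad P (x + t *: s) - grad P x.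
have ha : sqnorm a <= (L * t) ^+ 2 * sqnorm s.
  have l := lip (x + t *: s) x.
  have exs : x + t *: s - x = t *: s by rewrite addrC addKr.
  rewrite exs in l.
  have en : enorm (t *: s) = t * enorm s.
    by rewrite /enorm sqnormZ sqrtrM ?sqr_ge0 // sqrtr_sqr ger0_norm // ltW.
  rewrite en in l.
  have ge : 0 <= enorm a by apply: sqrtr_ge0.
  have : enorm a * enorm a <= (L * (t * enorm s)) * (L * (t * enorm s)).
    exact: (ler_pM ge ge l l).
  rewrite -!expr2 /enorm sqr_sqrtr ?sqnorm_ge0 // => h.
  apply: (le_trans h).
  by rewrite !exprMn sqr_sqrtr ?sqnorm_ge0 // mulrA.
have hb := cs_bound (K := L * t) (mulr_ge0 L0 (ltW t0)) ha.
have : \sum_j s 0 j * grad P (x + t *: s) 0 j - c = \sum_j s 0 j * a 0 j.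
  rewrite /c -sumrB; apply: eq_bigr => j _; by rewrite /a mxB mulrBr.
move=> hc E.
have ek : k * (2 * t) = L * t * sqnorm s.
  by rewrite /k; move: (sqnorm s) => q; clear; field.
rewrite hc ek in E.
clearbody c k a.
move: E hb; move: (P (x + s)) (P x) (\sum_j s 0 j * a 0 j) (L * t * sqnorm s) => A B S Q.
clear; lra.
Qed.

Lemma coord (R : realType) (al eta L dh g v : R) : 0 < al -> al <= dh -> 0 < eta -> 0 <= L ->
  - (eta * (v / dh)) * g + L / 2 * (- (eta * (v / dh))) ^+ 2 <=
  eta / (2 * al) * (g - v) ^+ 2 - (1 / (2 * eta) - L / (2 * al)) * (dh * (- (eta * (v / dh))) ^+ 2)
  - eta / 2 * (dh^-1 * g ^+ 2).
Proof.
move=> al0 aldh eta0 L0.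
have dh0 : 0 < dh by apply: lt_le_trans aldh.
have key : eta / (2 * al) * (g - v) ^+ 2 - (1 / (2 * eta) - L / (2 * al)) * (dh * (- (eta * (v / dh))) ^+ 2)
  - eta / 2 * (dh^-1 * g ^+ 2) - (- (eta * (v / dh)) * g + L / 2 * (- (eta * (v / dh))) ^+ 2)
  = (al^-1 - dh^-1) * (eta / 2 * (g - v) ^+ 2 + L * eta ^+ 2 / 2 * v ^+ 2 * dh^-1).
  field.
  by rewrite ?gt_eqF // ?lt0r_neq0.
have pos : 0 <= (al^-1 - dh^-1) * (eta / 2 * (g - v) ^+ 2 + L * eta ^+ 2 / 2 * v ^+ 2 * dh^-1).
  apply: mulr_ge0.
    by rewrite subr_ge0 lef_pV2 ?posrE.
  apply: addr_ge0; first by apply: mulr_ge0; [apply: divr_ge0; [apply: ltW|]|apply: sqr_ge0].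
  apply: mulr_ge0; last by rewrite invr_ge0 ltW.
  apply: mulr_ge0; last exact: sqr_ge0.
  by apply: divr_ge0 => //; apply: mulr_ge0 => //; apply: sqr_ge0.
lra.
Qed.

Unset Implicit Arguments.

Theorem lemma2 (R : realType) (d n m : nat) (f : 'I_n -> 'rV[R]_d -> R) (L : R)
  (alpha beta eta p : R)
  (* realizations of the random quantities *)
  (z0 : 'I_m -> 'rV[R]_d) (J0 : 'I_m -> {set 'I_n})
  (z : nat -> 'rV[R]_d) (J : nat -> {set 'I_n})
  (idx : nat -> 'I_n) (coin : nat -> bool)
  (* generated sequences *)
  (w v D : nat -> 'rV[R]_d) :
  (0 < n)%N ->
  (* L-smoothness assumption *)
  (forall i, twice_diff (f i) /\ lipschitz_grad L (f i)) ->
  twice_diff (avgP f) -> lipschitz_grad L (avgP f) ->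
  (* parameters *)
  0 < alpha -> 0 < beta < 1 -> (1 <= m)%N -> 0 < eta -> 0 < p <= 1 ->
  (* Rademacher vectors; with p = 1 the full gradient is always taken *)
  (forall j, rademacher (z0 j)) -> (forall t, rademacher (z t)) ->
  (p = 1 -> forall t, coin t) ->
  (* preconditioner *)
  D 0%N = (m%:R)^-1 *: \sum_(j < m) hvp_diag (hessJ f (J0 j) (w 0%N)) (z0 j) ->
  (forall t, D t.+1 = beta *: D t + (1 - beta) *: hvp_diag (hessJ f (J t.+1) (w t.+1)) (z t.+1)) ->
  (* Scaled SARAH *)
  v 0%N = grad (avgP f) (w 0%N) ->
  (forall t, w t.+1 = w t - eta *: \row_i (v t 0 i / clipD alpha (D t) 0 i)) ->
  (forall t, v t.+1 = if coin t.+1 then grad (avgP f) (w t.+1)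
                      else v t + grad (f (idx t.+1)) (w t.+1) - grad (f (idx t.+1)) (w t)) ->
  forall t : nat,
    avgP f (w t.+1) <=
      avgP f (w t) + eta / (2 * alpha) * sqnorm (grad (avgP f) (w t) - v t)
      - (1 / (2 * eta) - L / (2 * alpha)) * dnorm2 (clipD alpha (D t)) (w t.+1 - w t)
      - eta / 2 * dnorm2 (\row_i (clipD alpha (D t) 0 i)^-1) (grad (avgP f) (w t)).
Proof.
move=> n0 Hf [dPa _] lip al0 _ _ eta0 _ _ _ _ _ _ _ Hw _ t.
have dP : forall y, differentiable (avgP f) y by move=> y; apply: dPa.
set dh := clipD alpha (D t).
have hdh : forall j, alpha <= dh 0 j by move=> j; rewrite /dh /clipD rowE le_max lexx.
have [d0|dpos] := posnP d.
  have emp : forall j : 'I_d, False by case=> j hj; rewrite d0 in hj.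
  have -> : w t.+1 = w t by apply/matrixP => i j; case: (emp j).
  have z0' : forall F : 'I_d -> R, \sum_j F j = 0 by move=> F; apply: big1 => j _; case: (emp j).
  by rewrite /sqnorm /dnorm2 !z0' !mulr0 !subr0 addr0.
have L0 : 0 <= L.
  have := lip (const_mx 1) 0.
  rewrite subr0.
  have hc : 0 < enorm (const_mx 1 : 'rV[R]_d).
    rewrite /enorm sqrtr_gt0 /sqnorm.
    under eq_bigr do rewrite mxE expr1n.
    by rewrite sumr_const card_ord ltr0n.
  have ge : 0 <= enorm (grad (avgP f) (const_mx 1) - grad (avgP f) 0) by apply: sqrtr_ge0.
  move=> h; have := le_trans ge h.
  by rewrite pmulr_lge0.
have := descent (w t) (w t.+1 - w t) dP lip L0.
rewrite addrC subrK => hd.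
apply: (le_trans hd).
have sj : forall j, (w t.+1 - w t) 0 j = - (eta * (v t 0 j / dh 0 j)).
  move=> j; rewrite Hw mxB mxB mxZ rowE.
  by move: (w t 0 j) (v t 0 j / dh 0 j) => A B; clear; lra.
rewrite -!addrA lerD2l !addrA.
rewrite /sqnorm /dnorm2 !mulr_sumr -!sumrB -big_split /=.
apply: ler_sum => j _.
rewrite !sj mxB rowE.
exact: coord.
Qed.
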